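(* Let $K$ be a field of characteristic $p$ with $K \neq \mathbb{F}_2$, let $X$ be a quasi-projective variety over $K$, let $S \subseteq \mathbb{N}_0$ be a $K$-DML set over $X$, and let $L$ be an extension field of $K$. Then $S$ is an $L$-DML set over $X_L := X \times_K L$.
   Context: For a field $K$ and a quasi-projective variety $X$ over $K$, a set $S \subseteq \mathbb{N}_0$ is a $K$-DML set over $X$ if there exist an endomorphism $\Phi$ of $X$ (a morphism $X \to X$ defined over $K$), a point $\alpha \in X(K)$ and a closed subvariety $V \subseteq X$ defined over $K$ (not necessarily irreducible) such that $S = \{ n \in \mathbb{N}_0 : \Phi^n(\alpha) \in V(K)\}$. *)

(* Defs.v *)
From HB Require Import structures.
From mathcomp Require Import all_boot all_order all_algebra.
From mathcomp Require Import mpoly.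
From Stdlib Require List.
Set Implicit Arguments. Unset Strict Implicit. Unset Printing Implicit Defensive.
Import GRing.Theory.
Local Open Scope ring_scope.

(* Concrete model of quasi-projective varieties over a field K:
   X = V(qp_eqs) \ V(qp_open) inside P^(qp_dim) (homogeneous coordinates
   indexed by 'I_(qp_dim.+1)), taken with its reduced structure.
   Points of P^N over a field are represented by nonzero coordinate vectors. *)
Record qp_data (K : fieldType) := QPData {
  qp_dim : nat;
  qp_eqs : seq {mpoly K[qp_dim.+1]};
  qp_open : seq {mpoly K[qp_dim.+1]} }.

Definition homogeneous (K : fieldType) (n : nat) (p : {mpoly K[n]}) : Prop :=
  exists d : nat, p \is d.-homog.

Definition is_qpvar (K : fieldType) (X : qp_data K) : Prop :=
  (forall f, f \in qp_eqs X -> homogeneous f) /\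
  (forall g, g \in qp_open X -> homogeneous g).

Definition nonzero_vec (L : fieldType) (n : nat) (v : 'I_n -> L) : bool :=
  [exists j, v j != 0].

Definition is_point (K L : fieldType) (sigma : {rmorphism K -> L})
    (X : qp_data K) (v : 'I_(qp_dim X).+1 -> L) : bool :=
  [&& nonzero_vec v,
      all (fun f => (map_mpoly sigma f).@[v] == 0) (qp_eqs X) &
      has (fun g => (map_mpoly sigma g).@[v] != 0) (qp_open X)].

Arguments is_point {K L} sigma X v.

Definition piece_eval (K L : fieldType) (sigma : {rmorphism K -> L}) (n : nat)
    (P : 'I_n -> {mpoly K[n]}) (v : 'I_n -> L) : 'I_n -> L :=
  fun j => (map_mpoly sigma (P j)).@[v].

(* Phi (a finite list of pieces, each given by homogeneous polynomials of a
   common degree with coefficients in K) defines an endomorphism of X over K: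
   at every geometric point (over every field extension of K) some piece is
   defined, every defined piece lands in X, and defined pieces agree as
   points of projective space. *)
Definition is_endo (K : fieldType) (X : qp_data K)
    (Phi : seq ('I_(qp_dim X).+1 -> {mpoly K[(qp_dim X).+1]})) : Prop :=
  (forall P, List.In P Phi -> exists d : nat, forall j, P j \is d.-homog) /\
  forall (L : fieldType) (sigma : {rmorphism K -> L}) (v : 'I_(qp_dim X).+1 -> L),
    is_point sigma X v ->
    (exists P, List.In P Phi /\ nonzero_vec (piece_eval sigma P v)) /\
    (forall P, List.In P Phi -> nonzero_vec (piece_eval sigma P v) ->
       is_point sigma X (piece_eval sigma P v)) /\
    (forall P Q, List.In P Phi -> List.In Q Phi ->
       nonzero_vec (piece_eval sigma P v) -> nonzero_vec (piece_eval sigma Q v) ->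
       exists c : L, c != 0 /\ forall j, piece_eval sigma P v j = c * piece_eval sigma Q v j).

Arguments is_endo {K} X Phi.

Definition endo_apply (K : fieldType) (n : nat) (Phi : seq ('I_n -> {mpoly K[n]}))
    (v : 'I_n -> K) : 'I_n -> K :=
  let vals := [seq (fun j => (P j).@[v]) | P <- Phi] in
  nth v vals (find (fun w => nonzero_vec w) vals).

Definition is_Kpoint (K : fieldType) (X : qp_data K) (v : 'I_(qp_dim X).+1 -> K) : bool :=
  [&& nonzero_vec v, all (fun f => f.@[v] == 0) (qp_eqs X) &
      has (fun g => g.@[v] != 0) (qp_open X)].

Arguments is_Kpoint {K} X v.

(* S is a K-DML set over X: there are an endomorphism Phi of X over K, a point
   alpha in X(K) and a closed subvariety V = X cap V(H) of X defined over K
   (H homogeneous over K) such that S = {n | Phi^n(alpha) in V(K)}. *)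
Definition DML_set (K : fieldType) (X : qp_data K) (S : nat -> Prop) : Prop :=
  exists (Phi : seq ('I_(qp_dim X).+1 -> {mpoly K[(qp_dim X).+1]}))
         (alpha : 'I_(qp_dim X).+1 -> K) (H : seq {mpoly K[(qp_dim X).+1]}),
    is_endo X Phi /\ is_Kpoint X alpha /\ (forall h, h \in H -> homogeneous h) /\
    forall n : nat, S n <-> all (fun h => h.@[iter n (endo_apply Phi) alpha] == 0) H.

Definition base_change (K L : fieldType) (sigma : {rmorphism K -> L}) (X : qp_data K)
  : qp_data L :=
  @QPData L (qp_dim X) [seq map_mpoly sigma f | f <- qp_eqs X]
                       [seq map_mpoly sigma g | g <- qp_open X].

(* Main.v *)
Require Import Defs.
From HB Require Import structures.
From mathcomp Require Import all_boot all_order all_algebra.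
From mathcomp Require Import mpoly.
From Stdlib Require Import FunctionalExtensionality.
Local Open Scope ring_scope.
Import GRing.Theory.

Section Aux.
Variables (n : nat) (K L : fieldType) (sigma : {rmorphism K -> L}).

Lemma meval_map (f : {mpoly K[n]}) (v : 'I_n -> K) :
  (map_mpoly sigma f).@[fun j => sigma (v j)] = sigma f.@[v].
Proof.
rewrite !mevalE rmorph_sum /=.
rewrite (perm_big _ (msupp_map_mpoly _ (fmorph_inj sigma))) /=.
apply: eq_bigr => m _; rewrite mcoeff_map_mpoly rmorphM rmorph_prod /=.
by congr (_ * _); apply: eq_bigr => i _; rewrite rmorphXn.
Qed.

Lemma homog_map (f : {mpoly K[n]}) d :
  f \is d.-homog -> map_mpoly sigma f \is d.-homog.
Proof.
by rewrite !dhomogE (perm_all _ (msupp_map_mpoly _ (fmorph_inj sigma))).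
Qed.

Lemma homogeneous_map (f : {mpoly K[n]}) :
  homogeneous f -> homogeneous (map_mpoly sigma f).
Proof. by case=> d hd; exists d; apply: homog_map. Qed.

Lemma map_map_mpoly (M : fieldType) (tau : {rmorphism L -> M}) (f : {mpoly K[n]}) :
  map_mpoly tau (map_mpoly sigma f) = map_mpoly (tau \o sigma) f.
Proof. by apply/mpolyP => m; rewrite !mcoeff_map_mpoly. Qed.

Lemma nonzero_map (v : 'I_n -> K) :
  nonzero_vec (fun j => sigma (v j)) = nonzero_vec v.
Proof.
rewrite /nonzero_vec; apply/existsP/existsP => [[j hj]|[j hj]]; exists j.
  by move: hj; rewrite fmorph_eq0.
by rewrite fmorph_eq0.
Qed.

End Aux.

Lemma In_map_inv (A B : Type) (f : A -> B) (s : seq A) y :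
  List.In y [seq f x | x <- s] -> exists x, List.In x s /\ y = f x.
Proof.
elim: s => [|a s IH] //= [<-|h]; first by exists a; split; [left|].
by case: (IH h) => x [hx ->]; exists x; split; [right|].
Qed.

Arguments In_map_inv {A B f s y}.

Lemma In_map_gen (A B : Type) (f : A -> B) (s : seq A) x :
  List.In x s -> List.In (f x) [seq f y | y <- s].
Proof. by elim: s => [|a s IH] //= [->|h]; [left|right; apply: IH]. Qed.

Lemma nth_map_gen (A B : Type) (f : A -> B) (x0 : A) (s : seq A) i :
  nth (f x0) [seq f x | x <- s] i = f (nth x0 s i).
Proof. by elim: s i => [|a s IH] [|i] //=. Qed.

Lemma find_map_gen (A B : Type) (f : A -> B) (p : pred B) (s : seq A) :
  find p [seq f x | x <- s] = find (p \o f) s.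
Proof. by elim: s => [|a s IH] //=; rewrite IH. Qed.

Theorem lemma3p2 (K : fieldType) (p : nat) (hp : p \in [pchar K])
    (hK : exists x : K, x != 0 /\ x != 1)
    (X : qp_data K) (hX : is_qpvar X) (S : nat -> Prop) (hS : DML_set X S)
    (L : fieldType) (sigma : {rmorphism K -> L}) :
  DML_set (base_change sigma X) S.
Proof.
case: hS => Phi [alpha [H [[hPhi1 hPhi2] [halpha [hH hSn]]]]].
set N := (qp_dim X).+1.
pose mp (P : 'I_N -> {mpoly K[N]}) := fun j => map_mpoly sigma (P j).
exists [seq mp P | P <- Phi], (fun j => sigma (alpha j)),
  [seq map_mpoly sigma h | h <- H].
have ptE : forall (M : fieldType) (tau : {rmorphism L -> M}) v,
    is_point tau (base_change sigma X) v = is_point (tau \o sigma) X v.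
  move=> M tau v; rewrite /is_point /= all_map has_map.
  congr [&& _, _ & _].
    by apply: eq_all => f /=; rewrite map_map_mpoly.
  by apply: eq_has => f /=; rewrite map_map_mpoly.
have peE : forall (M : fieldType) (tau : {rmorphism L -> M}) P v,
    piece_eval tau (mp P) v = piece_eval (tau \o sigma) P v.
  move=> M tau P v; apply: functional_extensionality => j.
  by rewrite /piece_eval /mp map_map_mpoly.
have applyE : forall v : 'I_N -> K,
    endo_apply [seq mp P | P <- Phi] (fun j => sigma (v j)) =
    (fun j => sigma (endo_apply Phi v j)).
  move=> v; rewrite /endo_apply.
  have -> : [seq (fun j => (x j).@[fun j0 => sigma (v j0)]) | x <- [seq mp P | P <- Phi]] =
            [seq (fun w : 'I_N -> K => fun j => sigma (w j))
                 ((fun P : 'I_N -> {mpoly K[N]} => fun j => (P j).@[v]) x) | x <- Phi].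
    elim: (Phi) => [|P s IH] //=; rewrite IH; congr (_ :: _).
    by apply: functional_extensionality => j; rewrite /mp meval_map.
  have hf : forall s : seq ('I_N -> K),
      find (fun w => nonzero_vec w) [seq (fun j => sigma (w j)) | w <- s] =
      find (fun w => nonzero_vec w) s.
    by elim=> [|w s IH] //=; rewrite IH nonzero_map.
  have e : [seq (fun j => sigma (x j).@[v]) | x <- Phi] =
     [seq (fun j => sigma (w j)) | w <- [seq (fun j => (P j).@[v]) | P <- Phi]].
    by rewrite -map_comp.
  rewrite e hf.
  by rewrite (@nth_map_gen _ _ (fun w : 'I_N -> K => fun j => sigma (w j)) v).
have iterE : forall k, iter k (endo_apply [seq mp P | P <- Phi]) (fun j => sigma (alpha j)) =
    (fun j => sigma (iter k (endo_apply Phi) alpha j)).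
  by elim=> [|k IH] //=; rewrite IH applyE.
split; [split|split; [|split]].
- move=> P' /In_map_inv [P [hP ->]]; case: (hPhi1 P hP) => d hd.
  by exists d => j; apply: homog_map.
- move=> M tau v; rewrite ptE => hv.
  case: (hPhi2 M (tau \o sigma) v hv) => [[P [hP hnz]] [hin hagree]].
  split; [|split].
  + by exists (mp P); split; [apply: In_map_gen|rewrite peE].
  + move=> P' /In_map_inv [Q [hQ ->]]; rewrite !peE ptE; exact: hin.
  + move=> P' Q' /In_map_inv [P1 [hP1 ->]] /In_map_inv [Q1 [hQ1 ->]].
    rewrite !peE; exact: hagree.
- move: halpha; rewrite /is_Kpoint /= nonzero_map all_map has_map.
  case/and3P => [h1 h2 h3]; apply/and3P; split => //.
    by apply: sub_all h2 => f /= /eqP hf; rewrite meval_map hf rmorph0.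
  by apply: sub_has h3 => f /=; rewrite meval_map fmorph_eq0.
- by move=> h /mapP [h0 h0in ->]; apply: homogeneous_map; apply: hH.
- move=> k; rewrite hSn iterE all_map.
  by rewrite (eq_all (a2 := fun h => h.@[iter k (endo_apply Phi) alpha] == 0)) //
     => h /=; rewrite meval_map fmorph_eq0.
Qed.
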